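(* Let $N,Q,S\ge 1$ be integers, let $\mathbf{H}\in\mathbb{R}^{Q\times N}$ with $\mathbf{H}\neq\mathbf{0}$, $\mathbf{y}\in\mathbb{R}^Q$, let $\mathbf{V}_0$ be a real matrix with $N$ columns, and for each $s\in\{1,\dots,S\}$ let $P_s\ge1$, $\mathbf{V}_s\in\mathbb{R}^{P_s\times N}$ and $\mathbf{c}_s\in\mathbb{R}^{P_s}$. Let $\Phi:\mathbb{R}^Q\to\mathbb{R}$ and, for every $\delta>0$ and $s\in\{1,\dots,S\}$, $\psi_{s,\delta}:\mathbb{R}\to\mathbb{R}$. For $\delta>0$ define $$F_\delta(\mathbf{x})=\Phi(\mathbf{H}\mathbf{x}-\mathbf{y})+\sum_{s=1}^S\psi_{s,\delta}(\|\mathbf{V}_s\mathbf{x}-\mathbf{c}_s\|)+\|\mathbf{V}_0\mathbf{x}\|^2,\qquad \mathbf{x}\in\mathbb{R}^N.$$ Assume: (a) $\Phi$ is continuous and coercive; (b) for every $\delta>0$ and $s$, $\psi_{s,\delta}$ is continuous and nonnegative; (c) $\operatorname{Ker}\mathbf{H}\cap\operatorname{Ker}\mathbf{V}_0=\{\mathbf{0}\}$; (d) for every $s$ and all $0<\delta_1\le\delta_2$, $\psi_{s,\delta_1}(t)\ge\psi_{s,\delta_2}(t)$ for all $t\in\mathbb{R}$; (e) there exists $\lambda>0$ such that for every $s$ and every $t\in\mathbb{R}$, $\lim_{\delta\to0,\,\delta>0}\psi_{s,\delta}(t)=\lambda\chi_{\mathbb{R}\setminus\{0\}}(t)$, where $\chi_{\mathbb{R}\setminus\{0\}}(t)=0$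 if $t=0$ and $1$ otherwise. Define $$F_0(\mathbf{x})=\Phi(\mathbf{H}\mathbf{x}-\mathbf{y})+\lambda\,\ell_0(\mathbf{V}\mathbf{x}-\mathbf{c})+\|\mathbf{V}_0\mathbf{x}\|^2,$$ where $\mathbf{V}=[\mathbf{V}_1^\top|\cdots|\mathbf{V}_S^\top]^\top$, $\mathbf{c}=[\mathbf{c}_1^\top,\dots,\mathbf{c}_S^\top]^\top$, and for $\mathbf{t}=[\mathbf{t}_1^\top,\dots,\mathbf{t}_S^\top]^\top$ with $\mathbf{t}_s\in\mathbb{R}^{P_s}$, $\ell_0(\mathbf{t})=\sum_{s=1}^S\chi_{\mathbb{R}\setminus\{0\}}(\|\mathbf{t}_s\|)$. Let $(\delta_n)_{n\in\mathbb{N}}$ be a decreasing sequence of positive reals converging to $0$. Then: (i) $\inf F_{\delta_n}\to\inf F_0$ as $n\to+\infty$; (ii) if for every $n$, $\hat{\mathbf{x}}_n$ is a minimizer of $F_{\delta_n}$, then $(\hat{\mathbf{x}}_n)_{n\in\mathbb{N}}$ is bounded and all its cluster points are minimizers of $F_0$; (iii) if $F_0$ has a unique minimizer $\tilde{\mathbf{x}}$, then $\hat{\mathbf{x}}_n\to\tilde{\mathbf{x}}$ as $n\to+\infty$.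
   Context: $\|\cdot\|$ denotes the Euclidean norm. *)

(* Defs.v *)
From HB Require Import structures.
From mathcomp Require Import all_boot all_order all_algebra.
From mathcomp Require Import all_classical all_reals all_analysis.
Set Implicit Arguments. Unset Strict Implicit. Unset Printing Implicit Defensive.
Import Order.TTheory GRing.Theory Num.Theory.
Import numFieldNormedType.Exports.
Local Open Scope ring_scope.
Local Open Scope classical_set_scope.

Definition enorm (R : realType) (n : nat) (v : 'cV[R]_n) : R :=
  Num.sqrt (\sum_(i < n) (v i 0) ^+ 2).

Definition chi_nz (R : realType) (t : R) : R := if t == 0 then 0 else 1.

Definition coercive (R : realType) (n : nat) (f : 'cV[R]_n -> R) : Prop :=
  forall M : R, exists r : R, forall z, r <= enorm z -> M <= f z.

Definition is_minimizer (R : realType) (n : nat) (f : 'cV[R]_n -> R) (x : 'cV[R]_n) : Prop :=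
  forall z, f x <= f z.

Definition inf_fun (R : realType) (n : nat) (f : 'cV[R]_n -> R) : R :=
  inf (range f).

Definition F_delta (R : realType) (N Q S : nat) (P : 'I_S -> nat) (M0 : nat)
  (Phi : 'cV[R]_Q -> R) (H : 'M[R]_(Q, N)) (y : 'cV[R]_Q) (V0 : 'M[R]_(M0, N))
  (V : forall s : 'I_S, 'M[R]_(P s, N)) (c : forall s : 'I_S, 'cV[R]_(P s))
  (psi : 'I_S -> R -> R -> R) (delta : R) (x : 'cV[R]_N) : R :=
  Phi (H *m x - y) + \sum_(s < S) psi s delta (enorm (V s *m x - c s))
  + enorm (V0 *m x) ^+ 2.

(* F_0, with lambda * l0(Vx - c) written blockwise *)
Definition F_zero (R : realType) (N Q S : nat) (P : 'I_S -> nat) (M0 : nat)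
  (Phi : 'cV[R]_Q -> R) (H : 'M[R]_(Q, N)) (y : 'cV[R]_Q) (V0 : 'M[R]_(M0, N))
  (V : forall s : 'I_S, 'M[R]_(P s, N)) (c : forall s : 'I_S, 'cV[R]_(P s))
  (lambda : R) (x : 'cV[R]_N) : R :=
  Phi (H *m x - y) + lambda * (\sum_(s < S) chi_nz (enorm (V s *m x - c s)))
  + enorm (V0 *m x) ^+ 2.

(* Main.v *)
Require Import Defs.
From HB Require Import structures.
From mathcomp Require Import all_boot all_order all_algebra.
From mathcomp Require Import all_classical all_reals all_analysis.
From mathcomp Require Import ring lra.
Set Implicit Arguments. Unset Strict Implicit.
Import Order.TTheory GRing.Theory Num.Theory.
Import numFieldNormedType.Exports.
Local Open Scope ring_scope.
Local Open Scope classical_set_scope.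

Definition esq (R : realType) n (v : 'cV[R]_n) : R := \sum_(i < n) (v i 0) ^+ 2.

Lemma esq_ge0 (R : realType) n (v : 'cV[R]_n) : 0 <= esq v.
Proof. by apply: sumr_ge0 => i _; exact: sqr_ge0. Qed.

Lemma enormE (R : realType) n (v : 'cV[R]_n) : enorm v = Num.sqrt (esq v).
Proof. by []. Qed.

Lemma enorm_ge0 (R : realType) n (v : 'cV[R]_n) : 0 <= enorm v.
Proof. exact: sqrtr_ge0. Qed.

Lemma enorm_sq (R : realType) n (v : 'cV[R]_n) : enorm v ^+ 2 = esq v.
Proof. by rewrite /enorm sqr_sqrtr // esq_ge0. Qed.

Lemma esq_entry (R : realType) n (v : 'cV[R]_n) i : (v i 0) ^+ 2 <= esq v.
Proof.
rewrite /esq (bigD1 i) //= lerDl; apply: sumr_ge0 => j _; exact: sqr_ge0.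
Qed.

Lemma entry_le_enorm (R : realType) n (v : 'cV[R]_n) i : `|v i 0| <= enorm v.
Proof. by rewrite -sqrtr_sqr /enorm ler_sqrt ?esq_ge0 // esq_entry. Qed.

Lemma esq_eq0 (R : realType) n (v : 'cV[R]_n) : esq v <= 0 -> v = 0.
Proof.
move=> h; apply/matrixP => i j; rewrite ord1 mxE.
have : (v i 0) ^+ 2 <= 0 by apply: le_trans (esq_entry v i) h.
by move=> h2; apply/eqP; rewrite -sqrf_eq0 eq_le h2 sqr_ge0.
Qed.

Lemma esqZ (R : realType) n (k : R) (v : 'cV[R]_n) : esq (k *: v) = k ^+ 2 * esq v.
Proof. by rewrite /esq mulr_sumr; apply: eq_bigr => i _; rewrite mxE exprMn. Qed.

Lemma esqD (R : realType) n (u v : 'cV[R]_n) : esq (u + v) <= 2 * esq u + 2 * esq v.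
Proof.
rewrite /esq !mulr_sumr -big_split /=; apply: ler_sum => i _; rewrite mxE.
have := sqr_ge0 (u i 0 - v i 0); nra.
Qed.

Lemma esq0 (R : realType) n : esq (0 : 'cV[R]_n) = 0.
Proof. by rewrite /esq big1 // => i _; rewrite mxE expr0n. Qed.

Lemma enorm0 (R : realType) n : enorm (0 : 'cV[R]_n) = 0.
Proof. by rewrite enormE esq0 sqrtr0. Qed.

Lemma mx_cont (R : realType) (T : topologicalType) p q (f : T -> 'M[R]_(p, q)) :
  (forall i j, continuous (fun x => f x i j)) -> continuous f.
Proof.
move=> hf x; apply/cvg_ballP => e e0.
have : \forall z \near x, forall ij : 'I_p * 'I_q, ball (f x ij.1 ij.2) e (f z ij.1 ij.2).
  apply: filter_forall => -[i j] /=.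
  exact: (cvg_ball (hf i j x)).
apply: filterS => z hz; split => // i j; exact: (hz (i, j)).
Qed.

Lemma contD (R : realType) (T : topologicalType) (f g : T -> R) :
  continuous f -> continuous g -> continuous (fun x => f x + g x).
Proof. by move=> hf hg x; apply: cvgD; [exact: hf|exact: hg]. Qed.

Lemma contB (R : realType) (T : topologicalType) (f g : T -> R) :
  continuous f -> continuous g -> continuous (fun x => f x - g x).
Proof. by move=> hf hg x; apply: cvgB; [exact: hf|exact: hg]. Qed.

Lemma contN (R : realType) (T : topologicalType) (f : T -> R) :
  continuous f -> continuous (fun x => - f x).
Proof. by move=> hf x; apply: cvgN; exact: hf. Qed.

Lemma contM (R : realType) (T : topologicalType) (f g : T -> R) :
  continuous f -> continuous g -> continuous (fun x => f x * g x).
Proof. by move=> hf hg x; apply: cvgM; [exact: hf|exact: hg]. Qed.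

Lemma sum_cont (R : realType) (T : topologicalType) (I : finType) (g : I -> T -> R) :
  (forall i, continuous (g i)) -> continuous (fun x => \sum_i g i x).
Proof.
move=> hg.
suff : forall r : seq I, continuous (fun x => \sum_(i <- r) g i x).
  by move=> /(_ (index_enum I)).
elim=> [|a r ih].
  rewrite (_ : (fun x => _) = fun=> 0); first exact: cst_continuous.
  by apply/funext => x; rewrite big_nil.
rewrite (_ : (fun x => _) = (fun x => g a x + \sum_(i <- r) g i x)).
  by move=> x; apply: cvgD; [exact: hg | exact: ih].
by apply/funext => x; rewrite big_cons.
Qed.

Lemma affine_cont (R : realType) m n (A : 'M[R]_(m, n)) (b : 'cV[R]_m) :
  continuous (fun x : 'cV[R]_n => A *m x - b).
Proof.
apply: mx_cont => i j.
rewrite (_ : (fun x => _) = (fun x : 'cV[R]_n => \sum_k A i k * x k j - b i j)).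
  apply: (@contB _ _ (fun x : 'cV[R]_n => \sum_k A i k * x k j) (fun=> b i j)).
    apply: sum_cont => k; apply: (@contM _ _ (fun=> A i k) (fun x : 'cV[R]_n => x k j)).
      exact: cst_continuous.
    exact: coord_continuous.
  exact: cst_continuous.
by apply/funext => x; rewrite !mxE.
Qed.

Lemma esq_cont (R : realType) n : continuous (@esq R n).
Proof.
apply: sum_cont => i; apply: (@contM _ _ (fun x : 'cV[R]_n => x i 0) (fun x => x i 0));
  exact: coord_continuous.
Qed.

Lemma enorm_cont (R : realType) n : continuous (@enorm R n).
Proof.
move=> x; apply: continuous_comp; first exact: esq_cont.
exact: sqrt_continuous.
Qed.

Lemma trmx_cont (R : realType) n : continuous (fun v : 'rV[R]_n => v^T).
Proof.
apply: mx_cont => i j.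
rewrite (_ : (fun v => _) = fun v : 'rV[R]_n => v j i); first exact: coord_continuous.
by apply/funext => v; rewrite mxE.
Qed.

Lemma closed_sub (R : realType) (T : topologicalType) (f : T -> R) (C : R) :
  continuous f -> closed [set z | f z <= C].
Proof.
move=> hf; apply: (@preimage_closed _ _ f [set t | t <= C]); last exact: closed_le.
by move=> z _; exact: hf.
Qed.

Lemma ball_compact (R : realType) n (r : R) : compact [set x : 'cV[R]_n | enorm x <= r].
Proof.
set C := [set v : 'rV[R]_n | forall i, `[-r, r]%classic (v ord0 i)].
have Cc : compact C.
  apply: (@rV_compact _ n (fun=> `[-r, r]%classic)) => i; exact: segment_compact.
have Tc : compact ((fun v : 'rV[R]_n => v^T) @` C).
  apply: continuous_compact => //; apply: continuous_subspaceT => v; exact: trmx_cont.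
have Kc := @closed_sub R _ (@enorm R n) r (@enorm_cont R n).
apply: (subclosed_compact Kc Tc).
move=> x hx; exists x^T; last by rewrite trmxK.
move=> i; rewrite mxE /= in_itv /=; rewrite -ler_norml.
exact: le_trans (entry_le_enorm x i) hx.
Qed.

Lemma seq_cluster (R : realType) n (u : nat -> 'cV[R]_n) (r : R) :
  (forall k, enorm (u k) <= r) -> exists x, cluster (u @ \oo) x.
Proof.
move=> hu.
have hF : (u @ \oo) [set x : 'cV[R]_n | enorm x <= r] by apply: (@filterE _ (\oo : set_system nat)) => k; exact: hu.
have [x [_ hx]] := @ball_compact R n r (u @ \oo) _ hF.
by exists x.
Qed.

Lemma cluster_le (R : realType) (T : topologicalType) (u : nat -> T) x (f : T -> R) (C : R) :
  continuous f -> cluster (u @ \oo) x -> (\forall k \near \oo, f (u k) <= C) -> f x <= C.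
Proof.
move=> hf hx hev.
have cl := @closed_sub R T f C hf.
have : closure [set z | f z <= C] x by move=> B hB; exact: hx _ _ hev hB.
by rewrite -(closure_id _).1.
Qed.

Lemma ev_ge (m : nat) : \forall k \near \oo, (m <= k)%N.
Proof. by exists m. Qed.

Lemma cont_lb (R : realType) n (f : 'cV[R]_n -> R) (r : R) :
  continuous f -> exists B, forall x, enorm x <= r -> B <= f x.
Proof.
move=> hf; apply: contrapT => hn.
have h : forall k : nat, exists x, enorm x <= r /\ f x < - k%:R.
  move=> k; apply: contrapT => hk; apply: hn; exists (- k%:R) => x hx.
  rewrite leNgt; apply/negP => lt; apply: hk; by exists x.
pose u k := projT1 (cid (h k)).
have hu k : enorm (u k) <= r /\ f (u k) < - k%:R := projT2 (cid (h k)).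
have [x hx] := seq_cluster (fun k => (hu k).1).
have hm : forall m : nat, f x <= - m%:R.
  move=> m; apply: (cluster_le hf hx).
  apply: filterS (ev_ge m) => k mk.
  apply: ltW; apply: lt_le_trans (hu k).2 _; by rewrite lerN2 ler_nat.
have h1 := Num.Theory.archi_boundP (normr_ge0 (f x)).
have h3 : - f x <= `|f x| by rewrite -normrN ler_norm.
have h4 := hm (Num.bound `|f x|).
have : (0:R) < 0 by lra.
by rewrite ltxx.
Qed.

Lemma phi_lb (R : realType) n (f : 'cV[R]_n -> R) :
  continuous f -> coercive f -> exists B, forall z, B <= f z.
Proof.
move=> hf hc; have [r hr] := hc 0.
have [B hB] := cont_lb r hf.
pose B0 := Num.min B 0; exists B0.
move=> z; have [h|h] := lerP r (enorm z).
  by rewrite /B0 ge_min (hr _ h) orbT.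
by rewrite /B0 ge_min hB // ltW.
Qed.

Lemma small_le0 (R : realType) (K a : R) : (forall m : nat, a <= K / (m.+1)%:R) -> a <= 0.
Proof.
move=> h; rewrite leNgt; apply/negP => a0.
set m := Num.bound (`|K| / a).
have h1 : `|K| / a < m%:R by apply: Num.Theory.archi_boundP; rewrite divr_ge0 // ltW.
have h2 : K <= `|K| := ler_norm K.
have h3 := h m.
have mp : (0 : R) < (m.+1)%:R by rewrite ltr0Sn.
have h4 : (m%:R : R) <= (m.+1)%:R by rewrite ler_nat.
have : `|K| < m%:R * a by rewrite -ltr_pdivrMr.
move: h3; rewrite ler_pdivlMr // => h3.
nra.
Qed.

Lemma lin_cont (R : realType) m n (A : 'M[R]_(m, n)) :
  continuous (fun x : 'cV[R]_n => A *m x).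
Proof.
rewrite (_ : (fun x => _) = (fun x : 'cV[R]_n => A *m x - 0)); first exact: affine_cont.
by apply/funext => x; rewrite subr0.
Qed.

Lemma divle (R : realType) (X K d E : R) :
  0 <= X -> X <= K -> 0 < d -> d <= E -> X / E <= K / d.
Proof.
move=> X0 XK d0 dE.
have E0 : 0 < E := lt_le_trans d0 dE.
rewrite ler_pdivrMr //.
have h1 : K / d * d = K by rewrite divfK // gt_eqF.
have K0 : 0 <= K := le_trans X0 XK.
have h2 : 0 <= K / d by rewrite divr_ge0 // ltW.
nra.
Qed.

Lemma coer (R : realType) N Q M0 (H : 'M[R]_(Q,N)) (y : 'cV[R]_Q)
  (V0 : 'M[R]_(M0,N)) (Phi : 'cV[R]_Q -> R) :
  continuous Phi -> coercive Phi ->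
  (forall x : 'cV[R]_N, H *m x = 0 -> V0 *m x = 0 -> x = 0) ->
  forall M, exists r, forall x, Phi (H *m x - y) + enorm (V0 *m x) ^+ 2 <= M -> enorm x <= r.
Proof.
move=> hc hco hk M.
have [B hB] := phi_lb hc hco.
have [r1 hr1] := hco (M + 1).
apply: contrapT => hn.
have h : forall k : nat, exists x, Phi (H *m x - y) + enorm (V0 *m x) ^+ 2 <= M /\
    (k.+1)%:R < enorm x.
  move=> k; apply: contrapT => hk'; apply: hn; exists (k.+1)%:R => x hx.
  rewrite leNgt; apply/negP => lt; apply: hk'; by exists x.
pose u k := projT1 (cid (h k)).
have hu : forall k, Phi (H *m u k - y) + enorm (V0 *m u k) ^+ 2 <= M /\
    (k.+1)%:R < enorm (u k) := fun k => projT2 (cid (h k)).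
pose e k := enorm (u k).
pose w k := (e k)^-1 *: u k.
have epos k : (k.+1)%:R < e k := (hu k).2.
have e0 k : 0 < e k by apply: lt_trans (epos k); rewrite ltr0Sn.
have ek k : (k.+1)%:R <= e k ^+ 2.
  have := epos k; have : (1 : R) <= (k.+1)%:R by rewrite ler1n.
  move=> h1 h2; nra.
have esqw k : esq (w k) = 1.
  by rewrite esqZ -enorm_sq exprVn mulVf // sqrf_eq0 gt_eqF.
have wb k : enorm (w k) <= 1 by rewrite enormE esqw sqrtr1.
have [x hx] := seq_cluster wb.
set K1 := M - B.
have aV k : esq (V0 *m u k) <= K1.
  by rewrite -enorm_sq; have := (hu k).1; have := hB (H *m u k - y); rewrite /K1; lra.
have aH k : Phi (H *m u k - y) <= M.
  by have := (hu k).1; have := sqr_ge0 (enorm (V0 *m u k)); lra.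
have K1ge : 0 <= K1 by apply: le_trans (aV 0%N); exact: esq_ge0.
have aH2 k : esq (H *m u k - y) <= r1 ^+ 2.
  have [h1|h1] := lerP r1 (enorm (H *m u k - y)).
    by have := hr1 _ h1; have := aH k; lra.
  rewrite -enorm_sq; have := enorm_ge0 (H *m u k - y); nra.
set K2 := 2 * r1 ^+ 2 + 2 * esq y.
have aH3 k : esq (H *m u k) <= K2.
  have := esqD (H *m u k - y) y; rewrite subrK => h1.
  by have := aH2 k; rewrite /K2; lra.
have K2ge : 0 <= K2 by apply: le_trans (aH3 0%N); exact: esq_ge0.
have bV k : esq (V0 *m w k) <= K1 / (k.+1)%:R.
  rewrite /w -scalemxAr esqZ exprVn mulrC.
  apply: divle; [exact: esq_ge0|exact: aV|exact: ltr0Sn|exact: ek].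
have bH k : esq (H *m w k) <= K2 / (k.+1)%:R.
  rewrite /w -scalemxAr esqZ exprVn mulrC.
  apply: divle; [exact: esq_ge0|exact: aH3|exact: ltr0Sn|exact: ek].
have cV : forall m : nat, esq (V0 *m x) <= K1 / (m.+1)%:R.
  move=> m; apply: (cluster_le (f := fun z => esq (V0 *m z)) _ hx).
    by move=> z; apply: continuous_comp; [exact: lin_cont|exact: esq_cont].
  apply: filterS (ev_ge m) => k mk; apply: le_trans (bV k) _.
  apply: divle => //; try exact: ltr0Sn; try by rewrite ler_nat.
have cH : forall m : nat, esq (H *m x) <= K2 / (m.+1)%:R.
  move=> m; apply: (cluster_le (f := fun z => esq (H *m z)) _ hx).
    by move=> z; apply: continuous_comp; [exact: lin_cont|exact: esq_cont].
  apply: filterS (ev_ge m) => k mk; apply: le_trans (bH k) _.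
  apply: divle => //; try exact: ltr0Sn; try by rewrite ler_nat.
have x0 : x = 0 by apply: hk; apply: esq_eq0; apply: small_le0; [exact: cH|exact: cV].
have : - enorm x <= - 1.
  apply: (cluster_le (f := fun z => - enorm z) _ hx).
    exact: (contN (@enorm_cont R N)).
  by apply: nearW => k; rewrite lerN2 enormE esqw sqrtr1.
by rewrite x0 enorm0 oppr0 lerNr oppr0 ler10.
Qed.

Lemma sum_cvg (R : realType) (T : Type) (F : set_system T) (FF : Filter F)
  (I : finType) (g : I -> T -> R) (l : I -> R) :
  (forall i, g i x @[x --> F] --> l i) -> (\sum_i g i x) @[x --> F] --> \sum_i l i.
Proof.
move=> hg.
suff : forall r : seq I, (\sum_(i <- r) g i x) @[x --> F] --> \sum_(i <- r) l i.
  by move=> /(_ (index_enum I)).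
elim=> [|a r ih].
  rewrite (_ : (fun x => _) = fun=> 0); first by rewrite big_nil; exact: cvg_cst.
  by apply/funext => x; rewrite big_nil.
rewrite (_ : (fun x => _) = (fun x => g a x + \sum_(i <- r) g i x)).
  by rewrite big_cons; apply: cvgD; [exact: hg | exact: ih].
by apply/funext => x; rewrite big_cons.
Qed.

Lemma cvgD' (R : realType) (T : Type) (F : set_system T) (FF : Filter F)
  (f g : T -> R) a b :
  f x @[x --> F] --> a -> g x @[x --> F] --> b -> (f x + g x) @[x --> F] --> a + b.
Proof. by move=> hf hg; apply: cvgD. Qed.

Lemma contC (T U V : topologicalType) (f : T -> U) (g : U -> V) :
  continuous f -> continuous g -> continuous (fun x => g (f x)).
Proof. by move=> hf hg x; apply: continuous_comp; [exact: hf|exact: hg]. Qed.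

Lemma contX2 (R : realType) (T : topologicalType) (f : T -> R) :
  continuous f -> continuous (fun x => f x ^+ 2).
Proof.
move=> hf; rewrite (_ : (fun x => _) = fun x => f x * f x); first exact: contM.
by apply/funext => x; rewrite expr2.
Qed.

Lemma inf_fun_le (R : realType) n (f : 'cV[R]_n -> R) B :
  (forall z, B <= f z) -> forall x, inf_fun f <= f x.
Proof.
move=> hB x; have hl : has_lbound (range f) by exists B => _ [z _ <-]; exact: hB.
by apply: (ge_inf hl); exists x.
Qed.

Lemma le_inf_fun (R : realType) n (f : 'cV[R]_n -> R) b :
  (forall x, b <= f x) -> b <= inf_fun f.
Proof.
move=> hb; apply: lb_le_inf; first by exists (f 0); exists 0.
by move=> _ [z _ <-]; exact: hb.
Qed.

Lemma inf_fun_adh (R : realType) n (f : 'cV[R]_n -> R) B eps :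
  (forall z, B <= f z) -> 0 < eps -> exists x, f x < inf_fun f + eps.
Proof.
move=> hB e0.
have hi : has_inf (range f).
  split; first by exists (f 0); exists 0.
  by exists B => _ [z _ <-]; exact: hB.
by have [_ [x _ <-] lt] := inf_adherent e0 hi; exists x.
Qed.

Unset Implicit Arguments. Set Strict Implicit.

Theorem proposition2 (R : realType) (N Q S : nat) (P : 'I_S -> nat) (M0 : nat)
  (H : 'M[R]_(Q, N)) (y : 'cV[R]_Q) (V0 : 'M[R]_(M0, N))
  (V : forall s : 'I_S, 'M[R]_(P s, N)) (c : forall s : 'I_S, 'cV[R]_(P s))
  (Phi : 'cV[R]_Q -> R) (psi : 'I_S -> R -> R -> R) (lambda : R)
  (delta : nat -> R) :
  (1 <= N)%N -> (1 <= Q)%N -> (1 <= S)%N ->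
  (forall s, (1 <= P s)%N) ->
  H != 0 ->
  (* (a) *)
  continuous Phi -> coercive Phi ->
  (* (b) *)
  (forall s d, 0 < d -> continuous (psi s d) /\ (forall t, 0 <= psi s d t)) ->
  (* (c) *)
  (forall x : 'cV[R]_N, H *m x = 0 -> V0 *m x = 0 -> x = 0) ->
  (* (d) *)
  (forall s d1 d2, 0 < d1 -> d1 <= d2 -> forall t, psi s d2 t <= psi s d1 t) ->
  (* (e) *)
  0 < lambda ->
  (forall s t, psi s d t @[d --> 0^'+] --> lambda * chi_nz t) ->
  (* the sequence delta_n *)
  (forall n, 0 < delta n) ->
  (forall n m, (n <= m)%N -> delta m <= delta n) ->
  delta @ \oo --> 0 ->
  let F := @F_delta R N Q S P M0 Phi H y V0 V c psi in
  let F0 := @F_zero R N Q S P M0 Phi H y V0 V c lambda in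
  (* (i) *)
  (fun n => inf_fun (F (delta n))) @ \oo --> inf_fun F0 /\
  forall xhat : nat -> 'cV[R]_N,
    (forall n, is_minimizer (F (delta n)) (xhat n)) ->
    (* (ii) *)
    (exists B : R, forall n, enorm (xhat n) <= B) /\
    (forall x, cluster (xhat @ \oo) x -> is_minimizer F0 x) /\
    (* (iii) *)
    (forall xt, is_minimizer F0 xt ->
       (forall z, is_minimizer F0 z -> z = xt) ->
       xhat @ \oo --> xt).
Proof.
Proof.
move=> _ _ _ _ _ hPc hPco hpsi hker hmono hlam hlim hdpos hdmono hd0 F F0.
have [B hB] := phi_lb hPc hPco.
pose G x := Phi (H *m x - y) + enorm (V0 *m x) ^+ 2.
have hcoer := coer y hPc hPco hker.
have chi_ge0 t : 0 <= chi_nz t by rewrite /chi_nz; case: ifP.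
have Gge x : B <= G x.
  by have := hB (H *m x - y); have := sqr_ge0 (enorm (V0 *m x)); rewrite /G; lra.
have Fd_ge d x : 0 < d -> G x <= F d x.
  move=> d0; rewrite /F /F_delta /G.
  have : 0 <= \sum_(s < S) psi s d (enorm (V s *m x - c s)).
    by apply: sumr_ge0 => s _; exact: (hpsi s d d0).2.
  lra.
have F0_ge x : G x <= F0 x.
  rewrite /F0 /F_zero /G.
  have : 0 <= lambda * \sum_(s < S) chi_nz (enorm (V s *m x - c s)).
    by apply: mulr_ge0; [exact: ltW|apply: sumr_ge0 => s _; exact: chi_ge0].
  lra.
have psi_seq s t : psi s (delta n) t @[n --> \oo] --> lambda * chi_nz t.
  exact: ((@cvg_at_rightP R (fun d => psi s d t) 0 _).1 (hlim s t) delta (conj hdpos hd0)).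
have psi_le s d t : 0 < d -> psi s d t <= lambda * chi_nz t.
  move=> d0.
  apply: (ler_cvg_to (cvg_cst (psi s d t)) (psi_seq s t)).
  apply: filterS (cvgr_le 0 hd0 d d0) => n hn; exact: hmono.
have Fmono n m x : (n <= m)%N -> F (delta n) x <= F (delta m) x.
  move=> nm; rewrite /F /F_delta lerD2r lerD2l; apply: ler_sum => s _.
  by apply: hmono => //; exact: hdmono.
have FleF0 n x : F (delta n) x <= F0 x.
  rewrite /F /F_delta /F0 /F_zero lerD2r lerD2l mulr_sumr; apply: ler_sum => s _.
  exact: psi_le.
have Fcont n : continuous (F (delta n)).
  rewrite /F /F_delta; apply: contD; first apply: contD.
  - by move=> x; apply: continuous_comp; [exact: affine_cont|exact: hPc].
  - apply: sum_cont => s x; apply: continuous_comp; last exact: (hpsi s _ (hdpos n)).1.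
    by apply: continuous_comp; [exact: affine_cont|exact: enorm_cont].
  - apply: contX2 => x; apply: continuous_comp; [exact: lin_cont|exact: enorm_cont].
have Fcvg x : F (delta n) x @[n --> \oo] --> F0 x.
  rewrite /F /F_delta /F0 /F_zero mulr_sumr.
  apply: cvgD'; last exact: cvg_cst.
  apply: cvgD'; first exact: cvg_cst.
  by apply: sum_cvg => s; exact: psi_seq.
have key (u : nat -> 'cV[R]_N) x C : cluster (u @ \oo) x ->
    (forall k, F (delta k) (u k) <= C) -> F0 x <= C.
  move=> hx hu.
  have hm m : F (delta m) x <= C.
    apply: (cluster_le (Fcont m) hx).
    apply: filterS (ev_ge m) => k mk; apply: le_trans (hu k); exact: Fmono.
  apply: (ler_cvg_to (Fcvg x) (cvg_cst C)).
  by apply: (@filterE _ (\oo : set_system nat)).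
have bnd (u : nat -> 'cV[R]_N) C : (forall k, F (delta k) (u k) <= C) ->
    exists r, forall k, enorm (u k) <= r.
  move=> hu; have [r hr] := hcoer C; exists r => k; apply: hr.
  by apply: le_trans (hu k); exact: Fd_ge.
have FBd n x : B <= F (delta n) x := le_trans (Gge x) (Fd_ge _ _ (hdpos n)).
have FB0 x : B <= F0 x := le_trans (Gge x) (F0_ge x).
split.
  set m := fun n => inf_fun (F (delta n)).
  set m0 := inf_fun F0.
  have m_le n : m n <= m0.
    apply: le_inf_fun => x; apply: le_trans (FleF0 n x).
    exact: (inf_fun_le (FBd n)).
  have m_mono n n' : (n <= n')%N -> m n <= m n'.
    move=> nn; apply: le_inf_fun => x; apply: le_trans (Fmono _ _ x nn).
    exact: (inf_fun_le (FBd n)).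
  have ev e : 0 < e -> \forall n \near \oo, m0 - e <= m n.
    move=> e0; have [[N1 hN]|hno] := pselect (exists N1, m0 - e <= m N1).
      by exists N1 => // n /= Nn; apply: le_trans hN (m_mono _ _ Nn).
    exfalso.
    have hlt N1 : m N1 < m0 - e.
      by rewrite ltNge; apply/negP => h; apply: hno; exists N1.
    have e2 : 0 < e / 2 by rewrite divr_gt0.
    have h n : exists x, F (delta n) x < m n + e / 2 := inf_fun_adh (FBd n) e2.
    pose u n := projT1 (cid (h n)).
    have hu n : F (delta n) (u n) < m n + e / 2 := projT2 (cid (h n)).
    have hu' k : F (delta k) (u k) <= m0 - e / 2.
      by have := hu k; have := hlt k; lra.
    have [r hr] := bnd u _ hu'.
    have [x hx] := seq_cluster hr.
    have := key u x _ hx hu'.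
    have := inf_fun_le FB0 x; rewrite -/m0; lra.
  apply/cvgrPdist_le => e e0; apply: filterS (ev e e0) => n hn.
  rewrite ler_norml; apply/andP; split; have := m_le n; lra.
move=> xhat hmin.
have hx_le k : F (delta k) (xhat k) <= F0 0 := le_trans (hmin k 0) (FleF0 k 0).
have [r hr] := bnd xhat _ hx_le.
have clmin x : cluster (xhat @ \oo) x -> is_minimizer F0 x.
  move=> hx z; apply: (key xhat x (F0 z) hx) => k.
  exact: le_trans (hmin k z) (FleF0 k z).
split; first by exists r.
split; first exact: clmin.
move=> xt hxt huniq.
have hcl : cluster (xhat @ \oo) = [set xt].
  apply/seteqP; split => x /=.
    by move=> hx; apply: huniq; exact: clmin.
  move=> ->; have [x' hx'] := seq_cluster hr.
  by have <- := huniq x' (clmin x' hx').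
have r0 : 0 <= r := le_trans (enorm_ge0 (xhat 0%N)) (hr 0%N).
apply: (@compact_cluster_set1 _ xt (xhat @ \oo) [set z | enorm z <= r + enorm xt + 1]).
- exact: norm_hausdorff.
- exact: ball_compact.
- apply: (cvgr_le _ (@enorm_cont R N xt)); lra.
- apply: (@filterE _ (\oo : set_system nat)) => k /=.
  by have := hr k; have := enorm_ge0 xt; lra.
- exact: hcl.
Qed.
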